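(* For every tight intersection lattice $L$, we have $\bullet(\mathrm{nti}(L))=2^{\hat 1_L}$, i.e., every subset of $\hat 1_L$ belongs to $\bullet(\mathrm{nti}(L))$.
   Context: A finite family $\mathcal{F}$ of sets is non-trivial if it is non-empty and no $X\in\mathcal{F}$ satisfies $X=\bigcup\mathcal{F}$. For such $\mathcal{F}$ and non-empty $\mathcal{T}\subseteq\mathcal{F}$, let $S_{\mathcal{T}}=\bigcap\mathcal{T}$, and let $S_\emptyset=\bigcup\mathcal{F}$. The intersection lattice of $\mathcal{F}$ is $\mathbb{L}_{\mathcal{F}}=(\{S_{\mathcal{T}}\mid\mathcal{T}\subseteq\mathcal{F}\},\subseteq)$, with greatest element $\hat 1=\bigcup\mathcal{F}$; an intersection lattice is one of this form. For $L=\mathbb{L}_{\mathcal{F}}$ and $x\in\hat 1$, let $\min_L(x)=S_{\{X\in\mathcal{F}\mid x\in X\}}$. $L$ is tight if for every $U\in L$ with $U\neq\hat 1$ there is exactly one $x\in\hat 1$ with $\min_L(x)=U$. Let $\mathrm{nti}(L)=\{U\in L\mid U\neq\hat 1\}$. For sets $A,B$, $A\,\dot\cup\,B=A\cup B$ is defined only when $A\cap B=\emptyset$, and $A\,\dot\setminus\,B=A\setminus B$ is defined only when $B\subseteq A$. For a finite family $\mathcal{G}$ of sets, $\bullet(\mathcal{G})$ is the smallest family of sets containing $\emptyset$ and every member of $\mathcal{G}$ and closed under all well-defined disjoint unions and subset complements. *)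

(* Defs.v *)
From mathcomp Require Import all_boot.
From mathcomp Require Import boolp classical_sets cardinality.
Set Implicit Arguments. Unset Strict Implicit. Unset Printing Implicit Defensive.
Local Open Scope classical_set_scope.

Section IntersectionLattice.
Variable T : Type.

(* A finite family of sets is modelled as F : set (set T) with finite_set F. *)

Definition hat1 (F : set (set T)) : set T := \bigcup_(X in F) X.

Definition nontrivial (F : set (set T)) : Prop :=
  F !=set0 /\ forall X, F X -> X <> hat1 F.

Definition S_ (F : set (set T)) (Tf : set (set T)) : set T :=
  if `[< Tf = set0 >] then hat1 F else \bigcap_(X in Tf) X.

Definition Lset (F : set (set T)) : set (set T) :=
  [set U | exists Tf, Tf `<=` F /\ U = S_ F Tf].

Definition minL (F : set (set T)) (x : T) : set T :=
  S_ F [set X | F X /\ X x].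

Definition tight (F : set (set T)) : Prop :=
  forall U, Lset F U -> U <> hat1 F ->
    exists! x, hat1 F x /\ minL F x = U.

Definition nti (F : set (set T)) : set (set T) :=
  [set U | Lset F U /\ U <> hat1 F].

Inductive bullet (G : set (set T)) : set T -> Prop :=
| bullet0 : bullet G set0
| bulletG A : G A -> bullet G A
| bulletU A B : bullet G A -> bullet G B -> A `&` B = set0 -> bullet G (A `|` B)
| bulletD A B : bullet G A -> bullet G B -> B `<=` A -> bullet G (A `\` B).

End IntersectionLattice.

(* Main.v *)
Require Import Defs.
From mathcomp Require Import all_boot.
From mathcomp Require Import boolp classical_sets cardinality.
Set Implicit Arguments. Unset Strict Implicit.
Local Open Scope classical_set_scope.

Section S.
Variable T : Type.
Implicit Types F : set (set T).

Lemma Tf_ne F x : hat1 F x -> [set X | F X /\ X x] <> set0.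
Proof.
case=> X FX Xx E.
have : [set X | F X /\ X x] X by [].
by rewrite E.
Qed.

Lemma minLE F x : hat1 F x -> minL F x = \bigcap_(X in [set X | F X /\ X x]) X.
Proof.
move=> hx; rewrite /minL /S_.
by case: asboolP => // /(Tf_ne hx).
Qed.

Lemma minL_in F x : hat1 F x -> minL F x x.
Proof. by move=> hx; rewrite minLE // => X []. Qed.

Lemma minL_props F x : nontrivial F -> hat1 F x ->
  Lset F (minL F x) /\ minL F x <> hat1 F.
Proof.
move=> [_ ntF] hx; split.
  by exists [set X | F X /\ X x]; split=> // X [].
have [X0 FX0 X0x] := hx.
move=> E; apply: (ntF X0 FX0).
apply/seteqP; split=> y.
  by move=> Xy; exists X0.
rewrite -E minLE // => Hy; exact: Hy.
Qed.

Lemma Lset_sub F U : Lset F U -> U `<=` hat1 F.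
Proof.
case=> Tf [sTF ->]; rewrite /S_.
case: asboolP => [_|HT] y Hy; first exact: Hy.
have [X TX] : Tf !=set0 by apply/set0P/eqP.
by exists X; [exact: sTF | exact: (Hy X TX)].
Qed.

Lemma minL_uniq F x z : nontrivial F -> tight F -> hat1 F x -> hat1 F z ->
  minL F z = minL F x -> z = x.
Proof.
move=> ntF tF hx hz E.
have [LU NU] := minL_props ntF hx.
have [w [_ uw]] := tF _ LU NU.
by rewrite -(uw z (conj hz E)) (uw x (conj hx erefl)).
Qed.


Lemma hat1_fin F : finite_set F -> nontrivial F -> tight F -> finite_set (hat1 F).
Proof.
move=> fF ntF tF.
have [sF EF] : exists sF : seq {classic (set T)}, (F : set {classic (set T)}) = [set` sF].
  by apply/finite_seqP.
pose f (z : T) : {ffun 'I_(size sF) -> bool} :=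
  [ffun i : 'I_(size sF) => `[< (nth set0 sF i : set T) z >]].
have inj : {in hat1 F &, injective f}.
  move=> z z'; rewrite !in_setE => hz hz' /ffunP E.
  apply: (minL_uniq ntF tF hz' hz); rewrite /minL; congr S_.
  apply/seteqP; split=> X [FX Xx]; split=> //.
    have : [set` sF] X by rewrite -EF.
    move=> /= /(nthP set0) [i Hi Ei].
    have := E (Ordinal Hi); rewrite !ffunE /= Ei.
    by case: asboolP => // _ /esym /asboolP.
  have : [set` sF] X by rewrite -EF.
  move=> /= /(nthP set0) [i Hi Ei].
  have := E (Ordinal Hi); rewrite !ffunE /= Ei.
  by case: (asboolP (X z')) => // _ /asboolP.
have /card_eqPle [_ le] := inj_card_eq inj.
exact: (card_le_finite le).
Qed.

Lemma count_le_in (A : eqType) (s : seq A) (p q : pred A) :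
  (forall a, a \in s -> p a -> q a) -> (count p s <= count q s)%N.
Proof.
elim: s => [|b s IH] H //=.
apply: leq_add; last by apply: IH => c cs; apply: H; rewrite inE cs orbT.
by case pb: (p b) => //; rewrite (H b) // mem_head.
Qed.

Lemma count_lt (A : eqType) (s : seq A) (p q : pred A) :
  (forall a, a \in s -> p a -> q a) -> (exists2 a, a \in s & q a && ~~ p a) ->
  (count p s < count q s)%N.
Proof.
elim: s => [|b s IH] H [a]; first by [].
rewrite inE => /orP [/eqP -> | ains] /andP [qa npa] /=.
  rewrite qa (negbTE npa) /= add0n add1n ltnS.
  by apply: count_le_in => c cs; apply: H; rewrite inE cs orbT.
have le : (p b <= q b)%N.
  by case pb: (p b) => //; rewrite (H b) // mem_head.
have : (count p s < count q s)%N.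
  apply: IH; last by exists a => //; rewrite qa npa.
  by move=> c cs; apply: H; rewrite inE cs orbT.
move=> lt; rewrite -addnS; exact: leq_add.
Qed.

Lemma bullet_fin (G : set (set T)) (s : seq {classic T}) :
  (forall z, z \in s -> bullet G [set z]) -> bullet G [set` s].
Proof.
elim: s => [|a s IH] H.
  have -> : [set` [::]] = @set0 {classic T} by apply/seteqP; split.
  exact: bullet0.
have Hs : bullet G [set` s] by apply: IH => z zs; apply: H; rewrite inE zs orbT.
case: (boolP (a \in s)) => ains.
  have -> : [set` (a :: s)] = [set` s] :> set {classic T}.
    apply/seteqP; split=> y /=; rewrite inE; last by move=> ->; rewrite orbT.
    by case/orP => // /eqP ->.
  done.
have -> : [set` (a :: s)] = [set a] `|` [set` s] :> set {classic T}.
  apply/seteqP; split=> y /=; rewrite inE.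
    by case/orP => [/eqP ->|ys]; [left | right].
  by case=> [->|->]; rewrite ?eqxx ?orbT.
apply: bulletU => //; first by apply: H; rewrite mem_head.
apply/seteqP; split=> y //= [-> ys]; by rewrite ys in ains.
Qed.

Lemma single F (sF : seq {classic (set T)}) :
  (F : set {classic (set T)}) = [set` sF] -> finite_set (hat1 F) ->
  nontrivial F -> tight F ->
  forall n x, hat1 F x ->
  (count (fun X : {classic (set T)} => ~~ `[< (X : set T) x >]) sF < n)%N ->
  bullet (nti F) [set x].
Proof.
move=> EF fH ntF tF; elim=> [//|n IH] x hx Hc.
have [LU NU] := minL_props ntF hx.
set U := minL F x in LU NU *.
have Ux : U x by exact: minL_in.
pose D := U `\` [set x].
have DU : D `<=` U by move=> y [].
have fD : finite_set (D : set {classic T}).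
  exact: (sub_finite_set (subset_trans DU (Lset_sub LU)) fH).
have [sD ED] : exists sD : seq {classic T}, (D : set {classic T}) = [set` sD].
  by apply/finite_seqP.
have bD : bullet (nti F) D.
  rewrite ED; apply: bullet_fin => z zs.
  have [Uz nzx] : D z by rewrite ED.
  have hz : hat1 F z by exact: (Lset_sub LU).
  apply: IH => //.
  have : (count (fun X : {classic (set T)} => ~~ `[< (X : set T) z >]) sF <
          count (fun X : {classic (set T)} => ~~ `[< (X : set T) x >]) sF)%N.
    apply: count_lt.
      move=> X Xs; apply: contra => /asboolP Xx; apply/asboolP.
      have FX : F X by rewrite EF.
      move: Uz; rewrite /U minLE //; exact.
    apply: contrapT => Hn; apply: nzx.
    apply: (minL_uniq ntF tF hx hz).
    rewrite /minL; congr S_; apply/seteqP; split=> X [FX XX]; split=> //.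
      case: (pselect (X x)) => // nXx; exfalso; apply: Hn; exists X.
        by have : [set` sF] X by rewrite -EF.
      by rewrite negbK; apply/andP; split; [apply/negP => /asboolP | apply/asboolP].
    move: Uz; rewrite /U minLE //; exact.
  move=> lt; exact: (leq_trans lt Hc).
have -> : [set x] = U `\` D.
  apply/seteqP; split=> y.
    by move=> /= ->; split=> //; rewrite /D; case=> _; apply.
  by move=> [Uy nDy]; apply: contrapT => nyx; apply: nDy; split.
apply: bulletD => //; exact: bulletG.
Qed.

End S.

Theorem fact4p8 (T : Type) (F : set (set T)) :
  finite_set F -> nontrivial F -> tight F ->
  bullet (nti F) = [set A | A `<=` hat1 F].
Proof.
move=> fF ntF tF.
apply/seteqP; split=> A.
  elim=> {A} [|A GA|A B _ HA _ HB _|A B _ HA _ _ _] //=.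
  - by case: GA => /Lset_sub.
  - by move=> y [/HA|/HB].
  - by move=> y [/HA].
move=> /= AH.
have fH := hat1_fin fF ntF tF.
have [sF EF] : exists sF : seq {classic (set T)}, (F : set {classic (set T)}) = [set` sF].
  by apply/finite_seqP.
have fA : finite_set (A : set {classic T}) by exact: (sub_finite_set AH fH).
have [sA EA] : exists sA : seq {classic T}, (A : set {classic T}) = [set` sA].
  by apply/finite_seqP.
rewrite EA; apply: bullet_fin => z zs.
have Az : A z by rewrite EA.
exact: (single EF fH ntF tF (n := (size sF).+1) (AH _ Az) (leq_ltn_trans (count_size _ _) (ltnSn _))).
Qed.
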